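(* The smallest order $n$ for which there exists a pair of unbiased weighing matrices of order $n$ and weight $9$ is $n=13$.
   Context: A weighing matrix of order $n$ and weight $k$ is an $n\times n$ matrix $W$ with entries in $\{1,-1,0\}$ such that $WW^T=kI_n$. Two weighing matrices $W_1,W_2$ of order $n$ and weight $k$ are unbiased if $\frac{1}{\sqrt{k}}W_1W_2^T$ is also a weighing matrix of order $n$ and weight $k$. *)

(* Defs.v *)
From mathcomp Require Import all_boot all_order all_algebra all_field.
Set Implicit Arguments. Unset Strict Implicit. Unset Printing Implicit Defensive.
Import Order.TTheory GRing.Theory Num.Theory.
Local Open Scope ring_scope.

Definition is_weighing (R : nzRingType) (n k : nat) (W : 'M[R]_n) : Prop :=
  (forall i j, W i j = 0 \/ W i j = 1 \/ W i j = -1) /\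
  W *m W^T = (k%:R)%:M.

Definition weighing (n k : nat) (W : 'M[int]_n) : Prop := is_weighing k W.

Definition unbiased (n k : nat) (W1 W2 : 'M[int]_n) : Prop :=
  weighing k W1 /\ weighing k W2 /\
  is_weighing k ((sqrtC (k%:R : algC))^-1 *: map_mx (fun z : int => z%:~R : algC) (W1 *m W2^T)).

(* Main.v *)
Require Import Defs.
From mathcomp Require Import all_boot all_order all_algebra all_field.
From mathcomp Require Import zify ring lra.
Set Implicit Arguments. Unset Strict Implicit. Unset Printing Implicit Defensive.
Import Order.TTheory GRing.Theory Num.Theory.
Local Open Scope ring_scope.

Lemma big_foldr_int (s : seq nat) (F : nat -> int) :
  \sum_(k <- s) F k = foldr (fun k acc => F k + acc) 0 s.
Proof. by elim: s => [|x s IH]; rewrite ?big_nil ?big_cons ?IH. Qed.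

Lemma mx_check n (f g h : nat -> nat -> int) :
  all (fun i => all (fun j =>
     foldr (fun k acc => f i k * g j k + acc) 0 (iota 0 n) == h i j) (iota 0 n)) (iota 0 n) ->
  (\matrix_(i < n, j < n) f i j) *m (\matrix_(i < n, j < n) g i j)^T
   = \matrix_(i < n, j < n) h i j.
Proof.
move=> H; apply/matrixP => i j; rewrite !mxE.
under eq_bigr do rewrite !mxE.
have Hi : (i:nat) \in iota 0 n by rewrite mem_iota /= ltn_ord.
have Hj : (j:nat) \in iota 0 n by rewrite mem_iota /= ltn_ord.
move/allP/(_ _ Hi)/allP/(_ _ Hj)/eqP: H => <-.
rewrite -big_foldr_int /index_iota.
rewrite -(big_mkord xpredT (fun k => f i k * g j k)).
by rewrite /index_iota subn0.
Qed.

Definition circ (s : seq int) (i j : nat) : int := nth 0 s ((j + 13 - i) %% 13).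
Definition la : seq int := [:: 0; 0; 1; 0; 1; 1; 1; -1; -1; 0; 1; -1; 1].
Definition lb : seq int := [:: 0; 0; 1; 1; 0; 1; 0; 1; -1; 1; 1; -1; -1].
Definition lc : seq int := [:: 1; 0; 0; 1; -1; 0; -1; 0; 1; 1; 1; -1; 1].
Definition MA : 'M[int]_13 := \matrix_(i < 13, j < 13) circ la i j.
Definition MB : 'M[int]_13 := \matrix_(i < 13, j < 13) circ lb i j.
Definition MC : 'M[int]_13 := \matrix_(i < 13, j < 13) circ lc i j.

Definition d9 (a b : nat) : int := if a == b then 9 else 0.
Lemma scal9 n : ((9%:R : int)%:M : 'M[int]_n) = \matrix_(i < n, j < n) d9 i j.
Proof. apply/matrixP => i j; rewrite !mxE /d9.
by rewrite -[X in if X then _ else _]/(i == j); case: (i == j). Qed.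

Lemma MA9 : MA *m MA^T = (9%:R)%:M.
Proof. rewrite /MA scal9; apply: mx_check. by vm_compute. Qed.

Lemma s3 : sqrtC (9%:R : algC) = 3.
Proof. have -> : (9%:R : algC) = 3 ^+ 2 by rewrite expr2 -natrM. by rewrite sqrCK // ler0n. Qed.

Lemma weigh_map n (C : 'M[int]_n) : weighing 9 C ->
  is_weighing 9 (map_mx (fun z : int => z%:~R : algC) C).
Proof.
case=> He Hp; split.
  move=> i j; rewrite mxE; case: (He i j) => [->|[->|->]]; rewrite ?rmorph0 ?rmorph1 ?rmorphN1; auto.
rewrite map_trmx -map_mxM Hp.
apply/matrixP => i j; rewrite !mxE.
by case: (i == j); rewrite ?mulr1n ?mulr0n ?rmorph0 // intr_nat.
Qed.

Lemma unb_of n (A B C : 'M[int]_n) : weighing 9 A -> weighing 9 B -> weighing 9 C ->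
  A *m B^T = 3%:R *: C -> unbiased 9 A B.
Proof.
move=> HA HB HC HAB; split => //; split => //.
have -> : (sqrtC (9%:R : algC))^-1 *: map_mx (fun z : int => z%:~R : algC) (A *m B^T)
   = map_mx (fun z : int => z%:~R : algC) C.
  apply/matrixP => i j; rewrite s3 HAB !mxE intrM.
  have -> : (3:int)%:~R = 3 :> algC by [].
  by rewrite mulKf // pnatr_eq0.
exact: weigh_map.
Qed.

Lemma circ_ent (s : seq int) : all (fun x => (x == 0) || (x == 1) || (x == -1)) s ->
  forall i j : 'I_13, (\matrix_(i < 13, j < 13) circ s i j) i j = 0 \/
     (\matrix_(i < 13, j < 13) circ s i j) i j = 1 \/ (\matrix_(i < 13, j < 13) circ s i j) i j = -1.
Proof.
move=> /allP H i j; rewrite mxE /circ.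
set k := (_ %% 13)%N.
case: (ltnP k (size s)) => Hk.
  by move: (H _ (mem_nth 0 Hk)) => /orP[/orP[]|] /eqP ->; auto.
by rewrite nth_default //; left.
Qed.

Definition t3 (a b : nat) : int := 3 * circ lc a b.
Lemma scal3 : 3%:R *: MC = \matrix_(i < 13, j < 13) t3 i j.
Proof. by apply/matrixP => i j; rewrite !mxE. Qed.

Lemma exist13 : exists W1 W2 : 'M[int]_13, unbiased 9 W1 W2.
Proof.
exists MA, MB; apply: (@unb_of _ _ _ MC).
- split; first exact: circ_ent.
  rewrite /MA scal9; apply: mx_check. by vm_compute.
- split; first exact: circ_ent.
  rewrite /MB scal9; apply: mx_check. by vm_compute.
- split; first exact: circ_ent.
  rewrite /MC scal9; apply: mx_check. by vm_compute.
- rewrite scal3 /MA /MB; apply: mx_check. by vm_compute.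
Qed.
Definition ent n (A : 'M[int]_n) := forall i j, A i j = 0 \/ A i j = 1 \/ A i j = -1.
Definition good n (A : 'M[int]_n) :=
  ent A /\ A *m A^T = (9%:R)%:M /\ A^T *m A = (9%:R)%:M.
Definition sqm n (A : 'M[int]_n) := map_mx (fun x => x * x) A.
Definition pzm n (A : 'M[int]_n) := map_mx (fun x => 1 - x * x) A.
Definition ev (x : int) := exists k, x = 2 * k.

Lemma good_tr n (A : 'M[int]_n) : good A -> good A^T.
Proof.
case=> He [H1 H2]; split; last by rewrite trmxK.
by move=> i j; rewrite mxE.
Qed.

Lemma rowsq n (A : 'M[int]_n) i : good A -> \sum_j A i j * A i j = 9.
Proof.
case=> _ [H _]; have := congr1 (fun M : 'M[int]_n => M i i) H; rewrite !mxE eqxx mulr1n => <-.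
by apply: eq_bigr => j _; rewrite mxE.
Qed.

Lemma pz_row n (A : 'M[int]_n) i : good A -> \sum_j pzm A i j = n%:R - 9.
Proof.
move=> HA; rewrite -(rowsq i HA).
under eq_bigr do rewrite mxE.
by rewrite sumrB sumr_const card_ord.
Qed.

Lemma pz_col n (A : 'M[int]_n) j : good A -> \sum_i pzm A i j = n%:R - 9.
Proof.
move=> /good_tr HA; rewrite -(pz_row j HA).
by apply: eq_bigr => i _; rewrite !mxE.
Qed.

Lemma pz_ge0 n (A : 'M[int]_n) i j : ent A -> 0 <= pzm A i j.
Proof. by move=> He; rewrite mxE; case: (He i j) => [->|[->|->]]. Qed.

Lemma pz_le1 n (A : 'M[int]_n) i j : ent A -> pzm A i j <= 1.
Proof. by move=> He; rewrite mxE; case: (He i j) => [->|[->|->]]. Qed.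

Lemma PP_ge0 n (A B : 'M[int]_n) r s : ent A -> ent B -> 0 <= (pzm A *m (pzm B)^T) r s.
Proof.
move=> HA HB; rewrite mxE; apply: sumr_ge0 => j _; rewrite [(pzm B)^T _ _]mxE.
by apply: mulr_ge0; apply: pz_ge0.
Qed.

Lemma key n (A B : 'M[int]_n) r s : good A -> good B ->
  (pzm A *m (pzm B)^T) r s = n%:R - 18 + (sqm A *m (sqm B)^T) r s.
Proof.
move=> HA HB; have h1 := rowsq r HA; have h2 := rowsq s HB.
rewrite !mxE.
under eq_bigr do rewrite !mxE.
under [X in _ = _ + X]eq_bigr do rewrite !mxE.
rewrite (eq_bigr (fun j => (1 - A r j * A r j) - B s j * B s j
   + (A r j * A r j) * (B s j * B s j))); last by move=> j _; ring.
rewrite big_split /= !sumrB h1 h2 sumr_const card_ord.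
ring.
Qed.

Lemma ev_sum n (F : 'I_n -> int) : (forall j, ev (F j)) -> ev (\sum_j F j).
Proof.
move=> H; apply: (big_ind ev) => //; first by exists 0.
by move=> x y [a ->] [b ->]; exists (a + b); ring.
Qed.

Lemma parity n (A B : 'M[int]_n) r s : ent A -> ent B ->
  ev ((sqm A *m (sqm B)^T) r s - (A *m B^T) r s).
Proof.
move=> HA HB; rewrite !mxE -sumrB; apply: ev_sum => j; rewrite !mxE.
case: (HA r j) => [->|[->|->]]; case: (HB s j) => [->|[->|->]];
  by [exists 0 | exists 1].
Qed.

Lemma PP_rowsum n (A B : 'M[int]_n) r : good A -> good B ->
  \sum_s (pzm A *m (pzm B)^T) r s = (n%:R - 9) ^+ 2.
Proof.
move=> HA HB.
under eq_bigr do rewrite mxE.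
rewrite exchange_big /=.
under eq_bigr => j _.
  under eq_bigr do rewrite [(pzm B)^T _ _]mxE.
  rewrite -mulr_sumr (pz_col j HB).
  over.
by rewrite -mulr_suml (pz_row r HA) expr2.
Qed.

Lemma small n (A : 'M[int]_n) : (0 < n)%N -> good A -> (9 <= n)%N.
Proof.
move=> Hn HA; have := rowsq (Ordinal Hn) HA.
case: HA => He _ Hs.
have : \sum_(j < n) A (Ordinal Hn) j * A (Ordinal Hn) j <= \sum_(j < n) (1 : int).
  by apply: ler_sum => j _; case: (He (Ordinal Hn) j) => [->|[->|->]].
rewrite Hs sumr_const card_ord.
rewrite -[9 : int]/(9%:R) ler_nat.
done.
Qed.

Lemma ar_odd (a b c k m : int) : a = 2 * m + 1 - 18 + b -> b - c = 2 * k -> 0 <= a -> c = 0 -> 1 <= a.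
Proof. lia. Qed.
Lemma ar_odd2 (x y z w : int) : y = x -> y <= z -> 0 <= w -> x <= w + z.
Proof. lia. Qed.

Lemma oddcase n (X : 'M[int]_n) (m : int) : n%:R = 2 * m + 1 -> (0 < n)%N -> good X ->
  (n.-1)%:R <= (n%:R - 9) ^+ 2 :> int.
Proof.
move=> Hm Hn HX; set r := Ordinal Hn.
rewrite -(PP_rowsum r HX HX) (bigD1 r) //=.
have He := HX.1.
have H1 : \sum_(s | s != r) (1:int) <= \sum_(s | s != r) (pzm X *m (pzm X)^T) r s.
  apply: ler_sum => s hs.
  have Hk := key r s HX HX.
  case: (parity r s He He) => k Hk2.
  have : (X *m X^T) r s = 0 by rewrite HX.2.1 mxE eq_sym (negPf hs) mulr0n.
  have := PP_ge0 r s He He.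
  rewrite Hm in Hk.
  move=> H0 H4; exact: (ar_odd Hk Hk2 H0 H4).
have H2 : \sum_(s | s != r) (1:int) = (n.-1)%:R by rewrite sumr_const cardC1 card_ord.
have H3 := PP_ge0 r r He He.
exact: (ar_odd2 H2 H1 H3).
Qed.

Lemma ar_even (a b c k m e : int) : a = 2 * m - 18 + b -> b - c = 2 * k -> c = 3 * e -> 0 <= a ->
  (e = 0 \/ e = 1 \/ e = -1) -> e * e <= a.
Proof. move=> H1 H2 H3 H4; case=> [E|[E|E]]; rewrite E in H3 *; lia. Qed.

Lemma evencase n (X Y C : 'M[int]_n) (m : int) : n%:R = 2 * m -> good X -> good Y -> good C ->
  X *m Y^T = 3%:R *: C -> forall r s, C r s * C r s <= (pzm X *m (pzm Y)^T) r s.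
Proof.
move=> Hm HX HY HC HXY r s.
have Hk := key r s HX HY; rewrite Hm in Hk.
case: (parity r s HX.1 HY.1) => k Hk2.
have H3 : (X *m Y^T) r s = 3 * C r s by rewrite HXY mxE.
exact: (ar_even Hk Hk2 H3 (PP_ge0 r s HX.1 HY.1) (HC.1 r s)).
Qed.

Lemma evensum n (X Y C : 'M[int]_n) (m : int) (r : 'I_n) : n%:R = 2 * m -> good X -> good Y -> good C ->
  X *m Y^T = 3%:R *: C -> 9 <= (n%:R - 9) ^+ 2 :> int.
Proof.
move=> Hm HX HY HC HXY; rewrite -(PP_rowsum r HX HY) -(rowsq r HC).
apply: ler_sum => s _; exact: (evencase Hm).
Qed.

Lemma eq12 (X Y C : 'M[int]_12) : good X -> good Y -> good C ->
  X *m Y^T = 3%:R *: C -> forall r s, (pzm X *m (pzm Y)^T) r s = C r s * C r s.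
Proof.
move=> HX HY HC HXY r s.
have Hle := @evencase 12 X Y C 6 erefl HX HY HC HXY r.
have H0 : \sum_s ((pzm X *m (pzm Y)^T) r s - C r s * C r s) = 0.
  by rewrite sumrB (PP_rowsum r HX HY) (rowsq r HC).
apply/eqP; rewrite -subr_eq0; apply/eqP.
move: s (isT : true); apply: (psumr_eq0P _ H0) => s _.
by rewrite subr_ge0.
Qed.

Lemma pzm_tr n (A : 'M[int]_n) : pzm A^T = (pzm A)^T.
Proof. by apply/matrixP => i j; rewrite !mxE. Qed.

Lemma PP_diag n (A : 'M[int]_n) i : good A -> (pzm A *m (pzm A)^T) i i = n%:R - 9.
Proof.
move=> HA; rewrite -(pz_row i HA) mxE; apply: eq_bigr => j _.
rewrite [(pzm A)^T _ _]mxE !mxE.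
by case: (HA.1 i j) => [->|[->|->]].
Qed.

Lemma ar_ev (a b c k m : int) : a = 2 * m - 18 + b -> b - c = 2 * k -> c = 0 -> ev a.
Proof. move=> H1 H2 H3; exists (m - 9 + k); rewrite H1; lia. Qed.

Lemma offev n (A : 'M[int]_n) (m : int) : n%:R = 2 * m -> good A ->
  forall i j, i != j -> ev ((pzm A *m (pzm A)^T) i j).
Proof.
move=> Hm HA i j hij.
have Hk := key i j HA HA; rewrite Hm in Hk.
case: (parity i j HA.1 HA.1) => k Hk2.
apply: (ar_ev Hk Hk2).
by rewrite HA.2.1 mxE (negPf hij) mulr0n.
Qed.

Lemma CY (X Y C : 'M[int]_12) : good X -> good Y -> X *m Y^T = 3%:R *: C -> C *m Y = 3%:R *: X.
Proof.
move=> HX HY HXY.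
have H : 3%:R *: (C *m Y) = 3%:R *: (3%:R *: X).
  by rewrite scalemxAl -HXY -mulmxA HY.2.2 mul_mx_scalar scalerA.
apply/matrixP => i j; have := congr1 (fun M : 'M[int]_12 => M i j) H; rewrite !mxE /=.
by move/mulfI; apply.
Qed.

Lemma ar_ge2 (a b : int) : ev a -> ev b -> 0 <= a -> 0 <= b -> ~ (a = 0 /\ b = 0) -> 2 <= a + b.
Proof. move=> [x Hx] [y Hy]; lia. Qed.

Lemma ar_28 : ~ ((28 : int) <= 9 + 9).
Proof. by []. Qed.

Lemma ar_4 (t : int) : 6 + 0 = 4 * t -> False.
Proof. lia. Qed.

Lemma case12 (X Y C : 'M[int]_12) : good X -> good Y -> good C ->
  X *m Y^T = 3%:R *: C -> False.
Proof.
move=> HX HY HC HXY.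
have HCY := CY HX HY HXY.
have HYt := good_tr HY; have HXt := good_tr HX.
have E1 : pzm X *m (pzm Y)^T = sqm C.
  by apply/matrixP => r s; rewrite (eq12 HX HY HC HXY) /sqm mxE.
have E2 : pzm C *m pzm Y = sqm X.
  apply/matrixP => r s; have := eq12 HC HYt HX; rewrite trmxK => /(_ HCY r s).
  by rewrite pzm_tr trmxK => ->; rewrite /sqm mxE.
pose Fm := (pzm X)^T *m pzm X.
pose Gm := (pzm Y)^T *m pzm Y.
have FmE : forall i j, Fm i j = (pzm X^T *m (pzm X^T)^T) i j by move=> i j; rewrite pzm_tr trmxK.
have GmE : forall i j, Gm i j = (pzm Y^T *m (pzm Y^T)^T) i j by move=> i j; rewrite pzm_tr trmxK.
have HQ : forall r c, (sqm C *m pzm Y) r c = 2 + pzm X r c.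
  move=> r c.
  have : (pzm C *m pzm Y) r c = sqm X r c by rewrite E2.
  rewrite !mxE.
  have -> : \sum_j sqm C r j * pzm Y j c = \sum_j pzm Y j c - \sum_j pzm C r j * pzm Y j c.
    rewrite -sumrB; apply: eq_bigr => j _; rewrite !mxE; ring.
  rewrite (pz_col c HY) => ->; ring.
have HFG : forall i j, (Fm *m Gm) i j = 6 + Fm i j.
  move=> i j; rewrite /Fm /Gm mulmxA -[(pzm X)^T *m pzm X *m (pzm Y)^T]mulmxA E1 -mulmxA.
  rewrite !mxE.
  under eq_bigr do rewrite HQ mulrDr.
  rewrite big_split /= -mulr_suml.
  have -> : \sum_i0 (pzm X)^T i i0 = 12%:R - 9.
    by rewrite -(pz_col i HX); apply: eq_bigr => k _; rewrite mxE.
  ring.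
have Fd : forall i, Fm i i = 3 by move=> i; rewrite FmE (PP_diag i HXt).
have Gd : forall i, Gm i i = 3 by move=> i; rewrite GmE (PP_diag i HYt).
have Fo : forall i j, i != j -> ev (Fm i j).
  by move=> i j h; rewrite FmE; apply: (@offev 12 _ 6 erefl HXt).
have Go : forall i j, i != j -> ev (Gm i j).
  by move=> i j h; rewrite GmE; apply: (@offev 12 _ 6 erefl HYt).
have F0 : forall i j, 0 <= Fm i j by move=> i j; rewrite FmE; apply: PP_ge0; case: HXt.
have G0 : forall i j, 0 <= Gm i j by move=> i j; rewrite GmE; apply: PP_ge0; case: HYt.
have Fs : \sum_j Fm ord0 j = 9.
  by under eq_bigr do rewrite FmE; rewrite (PP_rowsum _ HXt HXt).
have Gs : \sum_j Gm ord0 j = 9.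
  by under eq_bigr do rewrite GmE; rewrite (PP_rowsum _ HYt HYt).
have [j Hj] : exists j, [&& j != ord0, Fm ord0 j == 0 & Gm ord0 j == 0].
  case: (boolP [exists j, [&& j != ord0, Fm ord0 j == 0 & Gm ord0 j == 0]]) => [/existsP //|/existsPn Hn].
  exfalso.
  have : \sum_(j < 12) (if j == ord0 then 6 else 2 : int) <= \sum_j (Fm ord0 j + Gm ord0 j).
    apply: ler_sum => j _; case: eqP => [->|/eqP hj].
      by rewrite Fd Gd.
    have hj' : ord0 != j by rewrite eq_sym.
    apply: (ar_ge2 (Fo _ _ hj') (Go _ _ hj') (F0 _ _) (G0 _ _)).
    move=> [h1 h2]; move: (Hn j); rewrite hj h1 h2 !eqxx //.
  have -> : \sum_(j < 12) (if j == ord0 then 6 else 2 : int) = 28.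
    rewrite big_ord_recl eqxx (eq_bigr (fun _ => 2)) ?sumr_const ?card_ord //.
  move=> H; apply: ar_28; rewrite -[X in X + _]Fs -Gs -big_split /=; exact: H.
case/and3P: Hj => hj /eqP hF /eqP hG.
have := HFG ord0 j; rewrite hF mxE.
have [t ->] : exists t, \sum_k Fm ord0 k * Gm k j = 4 * t.
  apply: (big_ind (fun x => exists t, x = 4 * t)); first by exists 0.
    by move=> x y [a ->] [b ->]; exists (a + b); ring.
  move=> k _.
  case: (eqVneq k ord0) => [->|hk0]; first by exists 0; rewrite hG mulr0.
  case: (eqVneq k j) => [->|hkj]; first by exists 0; rewrite hF mul0r.
  have [a ->] : ev (Fm ord0 k) by apply: Fo; rewrite eq_sym.
  have [b ->] := Go k j hkj.
  by exists (a * b); ring.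
by move=> /esym; apply: ar_4.
Qed.

Lemma map9 n : map_mx (fun z : int => z%:~R : algC) ((9%:R : int)%:M : 'M_n) = (9%:R)%:M.
Proof.
apply/matrixP => i j; rewrite !mxE.
by case: (i == j); rewrite ?mulr1n ?mulr0n ?rmorph0 // intr_nat.
Qed.

Lemma map_inj n (A B : 'M[int]_n) :
  map_mx (fun z : int => z%:~R : algC) A = map_mx (fun z : int => z%:~R : algC) B -> A = B.
Proof.
move=> H; apply/matrixP => i j; apply: (@intr_inj algC).
by have := congr1 (fun M : 'M[algC]_n => M i j) H; rewrite !mxE.
Qed.

Lemma tr9 n (X : 'M[int]_n) : X *m X^T = (9%:R)%:M -> X^T *m X = (9%:R)%:M.
Proof.
move=> H.
set A := map_mx (fun z : int => z%:~R : algC) X.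
have HA : A *m A^T = (9%:R)%:M by rewrite map_trmx -map_mxM H map9.
have n9 : (9%:R : algC) != 0 by rewrite pnatr_eq0.
have H1 : A *m ((9%:R)^-1 *: A^T) = 1%:M.
  by rewrite -scalemxAr HA scale_scalar_mx mulVf.
have H2 := mulmx1C H1.
have HA2 : A^T *m A = (9%:R)%:M.
  have -> : A^T *m A = 9%:R *: (((9%:R)^-1 *: A^T) *m A).
    by rewrite -scalemxAl scalerA mulfV ?scale1r.
  by rewrite H2 scale_scalar_mx mulr1.
apply: map_inj; rewrite map9 -HA2 map_mxM map_trmx.
done.
Qed.

Lemma s3' : sqrtC (9%:R : algC) = 3.
Proof. have -> : (9%:R : algC) = 3 ^+ 2 by rewrite expr2 -natrM. by rewrite sqrCK // ler0n. Qed.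

Lemma good_of n (X : 'M[int]_n) : weighing 9 X -> good X.
Proof. by case=> He H; split => //; split => //; apply: tr9. Qed.

Lemma ent3 (d : int) (e : algC) : 3^-1 * d%:~R = e -> e = 0 \/ e = 1 \/ e = -1 ->
  d = 0 \/ d = 3 \/ d = -3.
Proof.
have n3 : (3 : algC) != 0 by rewrite pnatr_eq0.
move=> H; have H' : d%:~R = 3 * e :> algC by rewrite -H mulrA mulfV // mul1r.
case=> [E|[E|E]]; rewrite E in H'.
- by left; apply: (@intr_inj algC); rewrite H' mulr0.
- by right; left; apply: (@intr_inj algC); rewrite H' mulr1.
- by right; right; apply: (@intr_inj algC); rewrite H' mulrN1 rmorphN.
Qed.

Lemma unb_ext n (W1 W2 : 'M[int]_n) : unbiased 9 W1 W2 ->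
  exists C, good C /\ W1 *m W2^T = 3%:R *: C.
Proof.
case=> H1 [H2 [HE HEp]].
set D := W1 *m W2^T.
have HD : forall i j, D i j = 0 \/ D i j = 3 \/ D i j = -3.
  move=> i j; apply: (ent3 _ (HE i j)).
  by rewrite !mxE s3'.
pose C := \matrix_(i < n, j < n) (if D i j == 3 then 1 else if D i j == -3 then -1 else 0 : int).
have HDC : D = 3%:R *: C.
  apply/matrixP => i j; rewrite [RHS]mxE /C mxE.
  by case: (HD i j) => [->|[->|->]].
have HmC : (sqrtC (9%:R : algC))^-1 *: map_mx (fun z : int => z%:~R : algC) D
   = map_mx (fun z : int => z%:~R : algC) C.
  apply/matrixP => i j; rewrite s3' HDC !mxE intrM.
  have -> : (3:int)%:~R = 3 :> algC by [].
  by rewrite mulKf // pnatr_eq0.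
exists C; split => //.
apply: good_of; split.
  by move=> i j; rewrite mxE; case: ifP => _; [|case: ifP => _]; auto.
apply: map_inj; rewrite map_mxM -map_trmx -HmC map9.
exact: HEp.
Qed.

Lemma nonex : forall n : nat, (0 < n < 13)%N ->
     ~ exists W1 W2 : 'M[int]_n, unbiased 9 W1 W2.
Proof.
move=> n /andP[Hn0 Hn13] [W1 [W2 HU]].
have [C [HC HXY]] := unb_ext HU.
case: HU => H1 [H2 _].
have HX := good_of H1; have HY := good_of H2.
have H9 := small Hn0 HX.
have : n = 9 \/ n = 10 \/ n = 11 \/ n = 12 by lia.
case=> [E|[E|[E|E]]]; subst n.
- by have := @oddcase 9 W1 4 erefl Hn0 HX.
- by have := @evensum 10 W1 W2 C 5 ord0 erefl HX HY HC HXY.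
- by have := @oddcase 11 W1 5 erefl Hn0 HX.
- exact: (case12 HX HY HC HXY).
Qed.

Theorem corollary6p3 :
  (exists W1 W2 : 'M[int]_13, unbiased 9 W1 W2) /\
  (forall n : nat, (0 < n < 13)%N ->
     ~ exists W1 W2 : 'M[int]_n, unbiased 9 W1 W2).
Proof. split; [exact: exist13 | exact: nonex]. Qed.
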